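(* Let $I,J\in\mathbb Z$ with $4I^3\ne J^2$, and let \[ g(a,c,d)=(I-12d+3ac)(96d+3ac-2I)^2-(J+27c^2+27a^2d)^2 . \] Then the affine surface $Y_{I,J}\subset\mathbb A^3$ defined by $g(a,c,d)=0$ is absolutely irreducible. *)

(* Defs.v *)
From mathcomp Require Import all_boot all_order all_algebra all_field.
From mathcomp Require Import mpoly.
Set Implicit Arguments. Unset Strict Implicit. Unset Printing Implicit Defensive.
Import GRing.Theory Num.Theory.
Local Open Scope ring_scope.

(* Irreducibility of a multivariate polynomial over a field: p is
   non-constant (msize p > 1, i.e. total degree >= 1), and in every
   factorisation p = q * r one factor is constant (a unit, since p <> 0). *)
Definition mirreducible (R : idomainType) (n : nat) (p : {mpoly R[n]}) : Prop :=
  (1 < msize p)%N /\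
  forall q r : {mpoly R[n]}, p = q * r -> (msize q <= 1)%N \/ (msize r <= 1)%N.

Definition va : 'I_3 := @Ordinal 3 0 isT.
Definition vc : 'I_3 := @Ordinal 3 1 isT.
Definition vd : 'I_3 := @Ordinal 3 2 isT.

Definition g_IJ (I J : int) : {mpoly algC[3]} :=
  let a : {mpoly algC[3]} := 'X_va in
  let c : {mpoly algC[3]} := 'X_vc in
  let d : {mpoly algC[3]} := 'X_vd in
  let cI : {mpoly algC[3]} := (I%:~R : algC)%:MP in
  let cJ : {mpoly algC[3]} := (J%:~R : algC)%:MP in
  (cI - 12%:R * d + 3%:R * a * c) * (96%:R * d + 3%:R * a * c - 2%:R * cI) ^+ 2
  - (cJ + 27%:R * c ^+ 2 + 27%:R * a ^+ 2 * d) ^+ 2.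

(* Main.v *)
Require Import Defs.
From mathcomp Require Import all_boot all_order all_algebra all_field.
From mathcomp Require Import mpoly.
From mathcomp Require Import ring zify.
Import GRing.Theory Num.Theory.
Local Open Scope ring_scope.


Lemma mmap_comp (n : nat) (R : ringType) (S T : comRingType) (f : R -> S)
  (phi : {rmorphism S -> T}) (h : 'I_n -> S) (p : {mpoly R[n]}) :
  phi (mmap f h p) = mmap (phi \o f) (phi \o h) p.
Proof.
rewrite /mmap rmorph_sum; apply: eq_bigr => m _.
rewrite rmorphM /mmap1 rmorph_prod; congr (_ * _).
by apply: eq_bigr => i _; rewrite rmorphXn.
Qed.

Lemma eq_mmap (n : nat) (R S : ringType) (f1 f2 : R -> S) (h1 h2 : 'I_n -> S)
  (p : {mpoly R[n]}) : f1 =1 f2 -> h1 =1 h2 -> mmap f1 h1 p = mmap f2 h2 p.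
Proof.
move=> ef eh; rewrite /mmap; apply: eq_bigr => m _.
by rewrite ef (mmap1_eq _ eh).
Qed.

Lemma mmap_g (S : comRingType) (f : {rmorphism algC -> S}) (h : 'I_3 -> S) (I J : int) :
  mmap f h (g_IJ I J) =
  (f I%:~R - 12%:R * h vd + 3%:R * h va * h vc) *
  (96%:R * h vd + 3%:R * h va * h vc - 2%:R * f I%:~R) ^+ 2
  - (f J%:~R + 27%:R * h vc ^+ 2 + 27%:R * h va ^+ 2 * h vd) ^+ 2.
Proof.
have HX i : h i = mmap f h 'X_i by rewrite mmapX mmap1U.
have HC c : f c = mmap f h c%:MP by rewrite mmapC.
rewrite (HX va) (HX vc) (HX vd) (HC I%:~R) (HC J%:~R) /g_IJ.
ring.
Qed.

Notation A := {mpoly algC[3]}.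
Definition htau (i : 'I_3) : {poly A} := if (val i == 2)%N then 'X else ('X_i)%:P.
Definition tau (p : A) : {poly A} := mmap (polyC \o @mpolyC 3 algC) htau p.

Lemma tau_id p : (tau p).['X_vd] = p.
Proof.
have := @mmap_comp 3 algC {poly A} A (polyC \o @mpolyC 3 algC) (horner_eval 'X_vd) htau p.
rewrite /= /horner_eval /tau => ->.
rewrite -[RHS]comp_mpoly_id /comp_mpoly; apply: eq_mmap => [c|i] /=.
  by rewrite hornerC.
rewrite tnth_mktuple /htau.
case: i => [[|[|[|k]]] Hi] //=; rewrite ?hornerC ?hornerX //.
Qed.

Section G.
Variables I J : int.
Let a : A := 'X_va.
Let c : A := 'X_vc.
Let e : A := (I%:~R : algC)%:MP.
Let f : A := (J%:~R : algC)%:MP.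
Let u : A := 3%:R * a * c.
Let v := e + u.
Let w := u - 2%:R * e.
Let s := f + 27%:R * c ^+ 2.
Definition c3 : A := - 110592%:R.
Definition c2 : A := 9216%:R * v - 2304%:R * w - 729%:R * a ^+ 4.
Definition c1 : A := 192%:R * v * w - 12%:R * w ^+ 2 - 54%:R * a ^+ 2 * s.
Definition c0 : A := v * w ^+ 2 - s ^+ 2.

Lemma tau_g : tau (g_IJ I J) = Poly [:: c0; c1; c2; c3].
Proof.
rewrite /tau mmap_g /= /htau /=.
rewrite !cons_poly_def mul0r add0r /c0 /c1 /c2 /c3 /v /w /s /u /a /c /e /f.
ring.
Qed.
End G.
Lemma deg_contra (I J : int) (p : {poly algC}) :
  (I%:~R - 12%:R * p) * (96%:R * p - 2%:R * I%:~R) ^+ 2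
    != (J%:~R + 27%:R * 'X ^+ 2) ^+ 2.
Proof.
have nz k : (k%:R : algC) != 0 -> True by [].
have HR : size ((J%:~R + 27%:R * 'X ^+ 2 : {poly algC}) ^+ 2) = 5%N.
  have E : (J%:~R + 27%:R * 'X ^+ 2 : {poly algC}) = (27%:R)%:P * 'X^2 + (J%:~R)%:P.
    by ring.
  have H3 : size (J%:~R + 27%:R * 'X ^+ 2 : {poly algC}) = 3%N.
    rewrite E size_polyDl size_Cmul ?size_polyXn ?pnatr_eq0 //.
    by rewrite size_polyC; case: (_ != 0).
  have := size_exp (J%:~R + 27%:R * 'X ^+ 2 : {poly algC}) 2; rewrite H3 /=.
  by case: (size _) => // n /= ->.
apply/eqP => Heq; move: HR; rewrite -Heq.
have [Hp|Hp] := leqP (size p) 1.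
  have E : (I%:~R - 12%:R * p) * (96%:R * p - 2%:R * I%:~R) ^+ 2 =
    ((I%:~R - 12%:R * p`_0) * (96%:R * p`_0 - 2%:R * I%:~R) ^+ 2)%:P.
    by rewrite {1 2}(size1_polyC Hp); ring.
  by rewrite E size_polyC; case: (_ != 0).
have E1 : (I%:~R - 12%:R * p : {poly algC}) = (- 12%:R)%:P * p + (I%:~R)%:P by ring.
have E2 : (96%:R * p - 2%:R * I%:~R : {poly algC}) = (96%:R)%:P * p + (- (2%:R * I%:~R))%:P by ring.
have S1 : size (I%:~R - 12%:R * p : {poly algC}) = size p.
  rewrite E1 size_polyDl size_Cmul ?oppr_eq0 ?pnatr_eq0 //.
  by rewrite size_polyC; case: (_ != 0) => //; apply: leq_trans Hp.
have S2 : size (96%:R * p - 2%:R * I%:~R : {poly algC}) = size p.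
  rewrite E2 size_polyDl size_Cmul ?oppr_eq0 ?pnatr_eq0 //.
  by rewrite size_polyC; case: (_ != 0) => //; apply: leq_trans Hp.
have nzq (q : {poly algC}) : size q = size p -> q != 0.
  by move=> Hq; rewrite -size_poly_gt0 Hq; apply: leq_trans Hp.
have Sq : size ((96%:R * p - 2%:R * I%:~R : {poly algC}) ^+ 2) = ((size p).-1 * 2).+1.
  have := size_exp (96%:R * p - 2%:R * I%:~R : {poly algC}) 2.
  rewrite S2 => <-; rewrite prednK // lt0n size_poly_eq0 expf_neq0 //.
  exact: nzq.
rewrite size_mul ?S1 ?Sq ?(nzq _ S1) //; last exact: expf_neq0 (nzq _ S2).
lia.
Qed.

Definition hpsi (i : 'I_3) : {poly algC} := if (val i == 1)%N then 'X else 0.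
Definition psi (p : A) : {poly algC} := mmap (polyC : algC -> {poly algC}) hpsi p.

Lemma no_root I J x : (tau (g_IJ I J)).[x] != 0.
Proof.
apply/negP => /eqP H.
have := congr1 psi H.
rewrite /psi rmorph0.
change ((tau (g_IJ I J)).[x]) with (horner_eval x (tau (g_IJ I J))).
rewrite /tau mmap_comp mmap_comp mmap_g /= /htau /horner_eval /=.
rewrite !hornerC !hornerX !mmapC !mmapX !mmap1U /hpsi /=.
set p := mmap _ _ x => H0.
apply: (negP (deg_contra I J p)); apply/eqP; apply/subr0_eq; rewrite -[RHS]H0.
ring.
Qed.

Lemma c3_C : c3 = ((- 110592%:R : algC))%:MP.
Proof. by rewrite /c3 raddfN /= mpolyC_nat. Qed.

Lemma msize_c3 : msize c3 = 1%N.
Proof. by rewrite c3_C msizeC oppr_eq0 pnatr_eq0. Qed.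

Lemma c3_neq0 : c3 != 0.
Proof. by rewrite -msize_poly_eq0 msize_c3. Qed.

Lemma size_tau_g I J : size (tau (g_IJ I J)) = 4%N.
Proof. by rewrite tau_g -[size _]/(size (polyseq _)) (PolyK (c := 0)) //= c3_neq0. Qed.

Lemma lead_tau_g I J : lead_coef (tau (g_IJ I J)) = c3.
Proof. by rewrite lead_coefE size_tau_g tau_g (PolyK (c := 0)) //= c3_neq0. Qed.

Lemma const_case p : size (tau p) = 1%N -> msize (lead_coef (tau p)) = 1%N ->
  (msize p <= 1)%N.
Proof.
move=> Hs Hl.
have Hc := size1_polyC (eq_leq Hs).
have /msize_poly1P [k _ Hk] : msize (lead_coef (tau p)) == 1%N by rewrite Hl.
rewrite lead_coefE Hs /= in Hk.
by rewrite -(tau_id p) Hc Hk hornerC msizeC; case: (_ != 0).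
Qed.

Lemma root_case (Q : {poly A}) : size Q = 2%N -> msize (lead_coef Q) = 1%N ->
  exists x, Q.[x] = 0.
Proof.
move=> Hs Hl.
have /msize_poly1P [k nzk Hk] : msize (lead_coef Q) == 1%N by rewrite Hl.
rewrite lead_coefE Hs /= in Hk.
exists (- (k^-1 *: Q`_0)).
rewrite horner_coef Hs big_ord_recr big_ord_recr big_ord0 /= Hk.
rewrite expr0 expr1 mulr1 add0r mulrN mul_mpolyC scalerA mulfV // scale1r.
by rewrite addrN.
Qed.


Lemma nat_aux (x y : nat) : (x + y).-1 = 1%N -> x != 0%N -> y != 0%N -> x = 1%N /\ y = 1%N.
Proof. lia. Qed.
Lemma nat_aux2 (x y : nat) : (x + y).-1 = 4%N -> x != 0%N -> y != 0%N -> x != 1%N -> y != 1%N -> x != 2%N -> y = 2%N.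
Proof. lia. Qed.
Lemma msize_nz (p : A) : p != 0 -> msize p != 0%N.
Proof. by rewrite msize_poly_eq0. Qed.

Lemma noroot_aux (G q r : A) x : (tau G).[x] != 0 -> tau G = tau q * tau r ->
  (tau q).[x] = 0 \/ (tau r).[x] = 0 -> False.
Proof.
move=> nG HQR Hx.
have E : (tau G).[x] = (tau q).[x] * (tau r).[x].
  exact: (etrans (congr1 (horner^~ x) HQR) (hornerM _ _ _)).
case: Hx => H.
  have E0 := congr1 (fun y => y * (tau r).[x]) H.
  have E1 := etrans E E0.
  by move: nG; rewrite /= mul0r in E1; rewrite E1 eqxx.
have E0 := congr1 (fun y => (tau q).[x] * y) H.
have E1 := etrans E E0.
by move: nG; rewrite /= mulr0 in E1; rewrite E1 eqxx.
Qed.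

Lemma factor_aux (G q r : A) : (forall x, (tau G).[x] != 0) ->
  lead_coef (tau G) = c3 -> size (tau G) = 4%N -> G = q * r ->
  (msize q <= 1)%N \/ (msize r <= 1)%N.
Proof.
move=> noG leadG sizeG Hqr.
have HQR : tau G = tau q * tau r by rewrite Hqr /tau rmorphM.
have nzQ : tau q != 0.
  by apply/eqP => H0; move: sizeG; rewrite HQR H0 mul0r size_poly0.
have nzR : tau r != 0.
  by apply/eqP => H0; move: sizeG; rewrite HQR H0 mulr0 size_poly0.
have Hsz := size_mul nzQ nzR; rewrite -HQR in Hsz.
have {}Hsz := etrans (esym Hsz) sizeG.
have Hlc : lead_coef (tau q) * lead_coef (tau r) = c3.
  by rewrite -lead_coefM -HQR; exact: leadG.
have nzlq : lead_coef (tau q) != 0 by rewrite lead_coef_eq0.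
have nzlr : lead_coef (tau r) != 0 by rewrite lead_coef_eq0.
have Hm := msizeM nzlq nzlr; rewrite Hlc msize_c3 in Hm.
have mq := msize_nz _ nzlq.
have mr := msize_nz _ nzlr.
have sq : size (tau q) != 0%N by rewrite size_poly_eq0.
have sr : size (tau r) != 0%N by rewrite size_poly_eq0.
have [mq1 mr1] := nat_aux _ _ (esym Hm) mq mr.
have [Hq1|Hq1] := eqVneq (size (tau q)) 1%N.
  by left; exact: (const_case q Hq1 mq1).
have [Hr1|Hr1] := eqVneq (size (tau r)) 1%N.
  by right; exact: (const_case r Hr1 mr1).
have [Hq2|Hq2] := eqVneq (size (tau q)) 2%N.
  have [x Hx] := root_case _ Hq2 mq1.
  by case: (noroot_aux G q r x (noG x) HQR); left.
have Hr2 := nat_aux2 _ _ Hsz sq sr Hq1 Hr1 Hq2.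
have [x Hx] := root_case _ Hr2 mr1.
by case: (noroot_aux G q r x (noG x) HQR); right.
Qed.

Theorem lemma6p2 (I J : int) (hIJ : 4 * I ^+ 3 != J ^+ 2) :
  mirreducible (g_IJ I J).
Proof.
have := size_tau_g I J; have := lead_tau_g I J; have := no_root I J.
move: (g_IJ I J) => G noG leadG sizeG.
split.
  rewrite ltnNge; apply/negP => Hg.
  move: sizeG; rewrite (msize1_polyC Hg) /tau mmapC /= size_polyC.
  by case: (_ != 0).
move=> q r Hqr.
exact: (factor_aux G q r noG leadG sizeG Hqr).
Qed.
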